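(* Let $G$ be a finite connected simple graph that has no spanning tree with at most $4$ leaves, and let $T$ be a maximal tree of $G$ with $5$ leaves (i.e., a subtree of $G$ with exactly $5$ leaves whose number of vertices is maximum among all subtrees of $G$ with exactly $5$ leaves). Then there is no tree $T'$ in $G$ such that $T'$ has at most $4$ leaves and $V(T')=V(T)$.
   Context: A leaf of a tree is a vertex of degree one in the tree. A tree in $G$ means a subgraph of $G$ that is a tree. *)

(* Defs.v *)
From mathcomp Require Import all_boot.
Set Implicit Arguments. Unset Strict Implicit. Unset Printing Implicit Defensive.

Definition simple_graph (T : finType) (e : rel T) : Prop :=
  symmetric e /\ irreflexive e.

Definition graph_connected (T : finType) (e : rel T) : Prop :=
  forall x y : T, connect e x y.

Definition edge_rel (T : finType) (E : {set {set T}}) : rel T :=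
  fun x y => [set x; y] \in E.

Definition is_subtree (T : finType) (e : rel T) (V : {set T}) (E : {set {set T}}) : Prop :=
  [/\ V != set0,
      (forall f, f \in E -> exists x y, [/\ x \in V, y \in V, e x y & f = [set x; y]]),
      (forall x y, x \in V -> y \in V -> connect (edge_rel E) x y)
    & (forall s : seq T, uniq s -> 3 <= size s -> ~~ cycle (edge_rel E) s)].

Definition tdeg (T : finType) (E : {set {set T}}) (v : T) : nat :=
  #|[set f in E | v \in f]|.

Definition nleaves (T : finType) (V : {set T}) (E : {set {set T}}) : nat :=
  #|[set v in V | tdeg E v == 1]|.

(* Main.v *)
Require Import Defs.
From mathcomp Require Import all_boot.
From mathcomp Require Import zify.
Set Implicit Arguments. Unset Strict Implicit. Unset Printing Implicit Defensive.

Section S.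
Variables (T : finType) (e : rel T).

Lemma edge_sym (F : {set {set T}}) : symmetric (edge_rel F).
Proof. by move=> x y; rewrite /edge_rel setUC. Qed.

Lemma edge_mem W F f x : is_subtree e W F -> f \in F -> x \in f -> x \in W.
Proof.
case=> _ HE _ _ fF xf; have [a [b [aW bW _ ef]]] := HE f fF.
by move: xf; rewrite ef !inE => /orP [] /eqP ->.
Qed.

Lemma ext_subtree W F u v : is_subtree e W F -> u \notin W -> v \in W -> e v u ->
  is_subtree e (u |: W) ([set v; u] |: F).
Proof.
move=> HT uW vW evu; have [Wn HE HC HA] := HT.
have uv : u != v by apply: contraNneq uW => ->.
split.
- by apply/set0Pn; exists u; rewrite !inE eqxx.
- move=> f; rewrite in_setU1 => /orP [/eqP ->|fF].
    by exists v, u; rewrite !inE eqxx vW orbT.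
  have [a [b [aW bW eab ->]]] := HE f fF.
  by exists a, b; rewrite !inE aW bW !orbT.
- have sub : subrel (edge_rel F) (connect (edge_rel ([set v; u] |: F))).
    by move=> x y; rewrite /edge_rel => H; apply: connect1; rewrite /edge_rel in_setU1 H orbT.
  have Evu : edge_rel ([set v; u] |: F) v u by rewrite /edge_rel in_setU1 eqxx.
  have Hs : connect_sym (edge_rel ([set v; u] |: F)) by apply: sym_connect_sym; apply: edge_sym.
  have Cw : forall x, x \in W -> connect (edge_rel ([set v; u] |: F)) u x.
    move=> x xW; apply: connect_trans (connect1 _) ((connect_sub sub) _ _ (HC _ _ vW xW)).
    by rewrite edge_sym.
  move=> x y; rewrite !in_setU1 => /orP [/eqP ->|xW] /orP [/eqP ->|yW].
  + exact: connect0.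
  + exact: Cw.
  + by rewrite Hs; apply: Cw.
  + exact: (connect_sub sub) _ _ (HC _ _ xW yW).
- have nuF : forall x, edge_rel F x u = false.
    move=> x; apply/negP => H; apply/negP: uW; rewrite negbK.
    by apply: (edge_mem HT H); rewrite !inE eqxx orbT.
  have Eu : forall x, x != u -> edge_rel ([set v; u] |: F) x u -> x = v.
    move=> x xu; rewrite /edge_rel in_setU1 -/(edge_rel F x u) nuF orbF => /eqP H.
    have : x \in [set v; u] by rewrite -H !inE eqxx.
    by rewrite !inE (negbTE xu) orbF => /eqP.
  move=> s us ss; apply/negP => cs.
  case: (boolP (u \in s)) => us'.
  + case/splitPr: us' us ss cs => p1 p2.
    rewrite -(rot_uniq (size p1)) -(rot_cycle (size p1)) rot_size_cat.
    rewrite -(size_rot (size p1)) rot_size_cat /= => /andP [un uq].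
    case: (p2 ++ p1) un uq => [|a [|b r]] //= un uq _.
    case/and3P => Eua _; rewrite rcons_path => /andP [_ Elast].
    have nua : a != u by apply: contraNneq un => ->; rewrite !inE eqxx.
    have av : a = v by apply: (Eu a nua); rewrite edge_sym.
    have nul : last b r != u.
      by apply: contraNneq un => <-; rewrite in_cons mem_last orbT.
    have lv := Eu _ nul Elast.
    case/and3P: uq => /negP H _ _; apply: H; rewrite av -lv; exact: mem_last.
  + move/HA: ss => /(_ us) /negP; apply.
    apply: (sub_in_cycle (P := [predC [set u]])) cs; last first.
      by apply/allP => x xs; rewrite !inE; apply: contraNneq us' => <-.
    move=> x y; rewrite !inE => xu yu; rewrite /edge_rel in_setU1 => /orP [|] //.
    move=> /eqP H; have : u \in [set x; y] by rewrite H !inE eqxx orbT.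
    by rewrite !inE ![u == _]eq_sym (negbTE xu) (negbTE yu).
Qed.

Lemma ext_leaves W F u v : is_subtree e W F -> u \notin W -> v \in W ->
  nleaves W F <= 4 -> nleaves (u |: W) ([set v; u] |: F) <= 5.
Proof.
move=> HT uW vW HL; have [Wn HE HC HA] := HT.
have uv : u != v by apply: contraNneq uW => ->.
set F' := [set v; u] |: F.
have nvF : [set v; u] \notin F.
  apply/negP => H; apply/negP: uW; rewrite negbK.
  by apply: (edge_mem HT H); rewrite !inE eqxx orbT.
have tdo : forall w, w != u -> w != v -> tdeg F' w = tdeg F w.
  move=> w wu wv; rewrite /tdeg; apply: eq_card => f.
  rewrite !inE; case: eqP => [->|] //=.
  by rewrite !inE (negbTE wu) (negbTE wv) andbF.
have tdv : tdeg F' v = (tdeg F v).+1.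
  rewrite /tdeg.
  have -> : [set f in F' | v \in f] = [set v; u] |: [set f in F | v \in f].
    by apply/setP => f; rewrite !inE; case: eqP => [->|] //=; rewrite !inE eqxx.
  by rewrite cardsU1 inE (negbTE nvF).
rewrite /nleaves.
case: (posnP (tdeg F v)) => [d0|dpos].
- have Wv : W \subset [set v].
    apply/subsetP => w wW; rewrite inE; apply/eqP.
    have := HC _ _ vW wW => /connectP [[|x p] /= pth ->] //.
    move: pth => /andP [Evx _].
    have : [set v; x] \in [set f in F | v \in f] by rewrite inE; apply/andP; split => //; rewrite !inE eqxx.
    by move: d0; rewrite /tdeg => /cards0_eq ->; rewrite inE.
  have sL : [set w in u |: W | tdeg F' w == 1] \subset u |: W.
    by apply/subsetP => w; rewrite inE => /andP [].
  apply: leq_trans (subset_leq_card sL) _.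
  have := subset_leq_card Wv; rewrite cards1 cardsU1 => HW.
  by apply: leq_trans (leq_add (leq_b1 _) HW) _.
- set L := [set w in W | tdeg F w == 1].
  apply: leq_trans (_ : #|u |: L| <= 5).
    apply: subset_leq_card; apply/subsetP => w; rewrite !inE => /andP [].
    case/orP => [->//|wW] td; apply/orP; right.
    case: (eqVneq w v) => [wv|wv].
      by move: td; rewrite wv tdv eqSS => /eqP d; rewrite d in dpos.
    by rewrite wW -(tdo _ _ wv) //; apply: contraNneq uW => <-.
  by rewrite cardsU1; apply: leq_trans (leq_add (leq_b1 _) HL) _.
Qed.

Lemma exit_edge W : W != set0 -> W != setT -> graph_connected e ->
  exists a b, [/\ a \in W, b \notin W & e a b].
Proof.
move=> /set0Pn [w wW] WT Hc.
have [z zW] : exists z, z \notin W.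
  case: (pickP [pred z | z \notin W]) => [z /= zW|H]; first by exists z.
  by move/eqP: WT; case; apply/setP => z; move: (H z) => /= /negbFE ->; rewrite inE.
have /connectP [p pth zl] := Hc w z.
elim: p w wW pth zl => [|x p IH] w wW /=; first by move=> _ zw; rewrite zw wW in zW.
move=> /andP [ewx pth] zl.
case: (boolP (x \in W)) => xW; first exact: IH xW pth zl.
by exists w, x.
Qed.
End S.
Unset Implicit Arguments. Set Strict Implicit. Set Printing Implicit Defensive.

Theorem lemma2p1 (T : finType) (e : rel T)
  (Hs : simple_graph e) (Hc : graph_connected e)
  (Hno : ~ exists E : {set {set T}},
           is_subtree e [set: T] E /\ nleaves [set: T] E <= 4)
  (V : {set T}) (E : {set {set T}})
  (HT : is_subtree e V E) (H5 : nleaves V E = 5)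
  (Hmax : forall (V2 : {set T}) (E2 : {set {set T}}),
            is_subtree e V2 E2 -> nleaves V2 E2 = 5 -> #|V2| <= #|V|) :
  ~ exists E' : {set {set T}}, is_subtree e V E' /\ nleaves V E' <= 4.
Proof.
move=> [E' [HT' HL']].
suff K : forall n W F, #|~: W| <= n -> is_subtree e W F -> nleaves W F <= 4 ->
    #|V| <= #|W| -> False by exact: (K _ V E' (leqnn _) HT' HL' (leqnn _)).
elim=> [|n IH] W F Hn HTW HLW HWV;
  (case: (eqVneq W setT) => [WT|WT]; first by apply: Hno; exists F; rewrite -WT);
  have [Wn _ _ _] := HTW;
  have [v [u [vW uW evu]]] := exit_edge Wn WT Hc.
  by move: Hn; rewrite leqn0 => /eqP /cards0_eq /setP /(_ u); rewrite !inE uW.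
have HT2 := ext_subtree HTW uW vW evu.
have HL2 := ext_leaves HTW uW vW HLW.
have c2 : #|u |: W| = #|W|.+1 by rewrite cardsU1 uW.
move: HL2; rewrite leq_eqVlt => /orP [/eqP H5'|HL2].
  by have := Hmax _ _ HT2 H5'; rewrite c2; lia.
apply: (IH _ _ _ HT2 HL2); last by rewrite c2; lia.
have := cardsC W; have := cardsC (u |: W); rewrite c2; lia.
Qed.
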